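(* Let $\mathbb{H}$ denote the ring of real quaternions with its usual norm $|\cdot|$, and let $S$ be a dense subsemigroup of $(\mathbb{H},+)$ such that $S\cap\mathbb{H}$ is a subsemigroup of $(\mathbb{H}\setminus\{0\},\cdot)$. Let $B_d(1)=\{x\in\mathbb{H}:|x|<1\}$. (1) If $A\subseteq S$ is an IP set near $0$, then $sA=\{sa:a\in A\}$ is an IP set near $0$ for every $s\in S\cap B_d(1)\setminus\{0\}$. (2) If $A\subseteq S$ is an IP$^*$ set near $0$ in $(S,+)$, then both $s^{-1}A=\{t\in S: st\in A\}$ and $As^{-1}=\{t\in S: ts\in A\}$ are IP$^*$ sets near $0$ for every $s\in S\cap B_d(1)\setminus\{0\}$.
   Context: For a sequence $\langle x_n\rangle_{n=1}^\infty$, $FS(\langle x_n\rangle_{n=1}^\infty)=\{\sum_{n\in F}x_n: F \text{ a finite nonempty subset of }\mathbb{N}\}$. A subset $A$ of $S$ is an IP set near $0$ if there exists a sequence $\langle x_n\rangle_{n=1}^\infty$ in $S$ such that $\sum_{n=1}^\infty x_n$ converges and $FS(\langle x_n\rangle_{n=1}^\infty)\subseteq A$. A subset $D$ of $S$ is an IP$^*$ set near $0$ if for every subset $C$ of $S$ which is an IP set near $0$, $C\cap D$ is an IP set near $0$. *)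

(* Defs.v *)
From Stdlib Require Import Reals List Lra.
Open Scope R_scope.

Record quat := Quat { qre : R; qi : R; qj : R; qk : R }.

Definition qzero : quat := Quat 0 0 0 0.
Definition qadd (x y : quat) : quat :=
  Quat (qre x + qre y) (qi x + qi y) (qj x + qj y) (qk x + qk y).
Definition qopp (x : quat) : quat := Quat (- qre x) (- qi x) (- qj x) (- qk x).
Definition qsub (x y : quat) : quat := qadd x (qopp y).
Definition qmul (x y : quat) : quat :=
  Quat (qre x * qre y - qi x * qi y - qj x * qj y - qk x * qk y)
       (qre x * qi y + qi x * qre y + qj x * qk y - qk x * qj y)
       (qre x * qj y - qi x * qk y + qj x * qre y + qk x * qi y)
       (qre x * qk y + qi x * qj y - qj x * qi y + qk x * qre y).
Definition qnorm (x : quat) : R :=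
  sqrt (qre x ^ 2 + qi x ^ 2 + qj x ^ 2 + qk x ^ 2).

Definition qset := quat -> Prop.

Definition qsum (x : nat -> quat) (l : list nat) : quat :=
  fold_right (fun n acc => qadd (x n) acc) qzero l.

(** FS(<x_n>): sums over finite nonempty subsets F of N
    (F represented as a nonempty duplicate-free list). *)
Definition FS (x : nat -> quat) : qset :=
  fun y => exists F : list nat, F <> nil /\ NoDup F /\ y = qsum x F.

Definition series_converges (x : nat -> quat) : Prop :=
  exists L : quat, forall eps, 0 < eps ->
    exists N, forall n, (N <= n)%nat -> qnorm (qsub (qsum x (seq 0 n)) L) < eps.

Definition IP_near0 (S A : qset) : Prop :=
  exists x : nat -> quat, (forall n, S (x n)) /\ series_converges x /\
    (forall y, FS x y -> A y).

Definition IPstar_near0 (S D : qset) : Prop :=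
  forall C : qset, (forall c, C c -> S c) -> IP_near0 S C ->
    IP_near0 S (fun y => C y /\ D y).

(* Main.v *)
Require Import Defs.
From Stdlib Require Import Reals Lra Psatz List.
Open Scope R_scope.

Definition linb (f : quat -> quat) := 
  (forall a b, f (qadd a b) = qadd (f a) (f b)) /\ f qzero = qzero /\
  (forall a b, f (qsub a b) = qsub (f a) (f b)) /\
  exists K, 0 <= K /\ forall a, qnorm (f a) <= K * qnorm a.

Lemma qnorm_ge0 a : 0 <= qnorm a.
Proof. unfold qnorm; apply sqrt_pos. Qed.

Lemma qnorm_mul a b : qnorm (qmul a b) = qnorm a * qnorm b.
Proof.
  destruct a as [a1 a2 a3 a4], b as [b1 b2 b3 b4]; unfold qnorm; simpl.
  rewrite <- sqrt_mult by nra. f_equal. ring.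
Qed.

Lemma linb_l c : linb (qmul c).
Proof.
  destruct c as [c1 c2 c3 c4]; repeat split.
  - intros [] []; unfold qmul, qadd; simpl; f_equal; ring.
  - unfold qmul, qzero; simpl; f_equal; ring.
  - intros [] []; unfold qmul, qsub, qadd, qopp; simpl; f_equal; ring.
  - exists (qnorm (Quat c1 c2 c3 c4)); split; [apply qnorm_ge0|].
    intro a; rewrite qnorm_mul; lra.
Qed.

Lemma linb_r c : linb (fun a => qmul a c).
Proof.
  destruct c as [c1 c2 c3 c4]; repeat split.
  - intros [] []; unfold qmul, qadd; simpl; f_equal; ring.
  - unfold qmul, qzero; simpl; f_equal; ring.
  - intros [] []; unfold qmul, qsub, qadd, qopp; simpl; f_equal; ring.
  - exists (qnorm (Quat c1 c2 c3 c4)); split; [apply qnorm_ge0|].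
    intro a; rewrite qnorm_mul; lra.
Qed.

Lemma qsum_map f x l : linb f -> qsum (fun n => f (x n)) l = f (qsum x l).
Proof.
  intros [Ha [H0 _]]. induction l as [|n l IH]; simpl; [auto|].
  rewrite IH, Ha; reflexivity.
Qed.

Lemma conv_map f x : linb f -> series_converges x -> series_converges (fun n => f (x n)).
Proof.
  intros Hf [L HL]. pose proof Hf as [_ [_ [Hs [K [HK Hn]]]]].
  exists (f L). intros eps He.
  destruct (HL (eps / (K + 1))) as [N HN]. { apply Rdiv_lt_0_compat; lra. }
  exists N; intros n Hn'. rewrite qsum_map by exact Hf. rewrite <- Hs.
  eapply Rle_lt_trans; [apply Hn|].
  specialize (HN n Hn'). pose proof (qnorm_ge0 (qsub (qsum x (seq 0 n)) L)).
  set (q := qnorm (qsub (qsum x (seq 0 n)) L)) in *.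
  assert (Hq : (K + 1) * q < (K+1) * (eps / (K+1))) by (apply Rmult_lt_compat_l; lra).
  replace ((K+1) * (eps / (K+1))) with eps in Hq by (field; lra).
  nra.
Qed.

Lemma FS_map f x y : linb f -> FS (fun n => f (x n)) y -> exists z, FS x z /\ y = f z.
Proof.
  intros Hf [F [H1 [H2 H3]]]. exists (qsum x F). split.
  - exists F; auto.
  - rewrite H3; apply qsum_map; exact Hf.
Qed.

Lemma qadd_0 a : qadd a qzero = a.
Proof. destruct a; unfold qadd, qzero; simpl; f_equal; ring. Qed.

Lemma FS_single x n : FS x (x n).
Proof.
  exists (n :: nil). split; [discriminate|]. split.
  - constructor; [intros []|constructor].
  - simpl; rewrite qadd_0; reflexivity.
Qed.

Lemma part1 (S A : qset) f : linb f -> (forall a, S a -> S (f a)) ->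
  IP_near0 S A -> IP_near0 S (fun y => exists a, A a /\ y = f a).
Proof.
  intros Hf HS [x [Hx [Hc HA]]]. exists (fun n => f (x n)). split; [auto|]. split.
  - apply conv_map; auto.
  - intros y Hy. destruct (FS_map f x y Hf Hy) as [z [Hz ->]]. exists z; auto.
Qed.

Lemma part2 (S A : qset) f g : linb f -> linb g -> (forall a, S a -> S (f a)) ->
  (forall a, g (f a) = a) ->
  IPstar_near0 S A -> IPstar_near0 S (fun t => S t /\ A (f t)).
Proof.
  intros Hf Hg HS Hgf HA C HC IPC.
  set (D := fun y => exists a, C a /\ y = f a).
  assert (HD : forall d, D d -> S d). { intros d [a [Ca ->]]; auto. }
  destruct (HA D HD (part1 S C f Hf HS IPC)) as [y [Hy [Hcy HFy]]].
  exists (fun n => g (y n)). split; [|split].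
  - intro n. destruct (HFy (y n) (FS_single y n)) as [[c [Cc ->]] _].
    rewrite Hgf; auto.
  - apply conv_map; auto.
  - intros w Hw. destruct (FS_map g y w Hg Hw) as [z [Hz ->]].
    destruct (HFy z Hz) as [[c [Cc ->]] Af]. rewrite Hgf. auto.
Qed.

Definition qinv (s : quat) : quat :=
  let n := qre s ^ 2 + qi s ^ 2 + qj s ^ 2 + qk s ^ 2 in
  Quat (qre s / n) (- qi s / n) (- qj s / n) (- qk s / n).

Lemma nz_norm s : s <> qzero -> qre s ^ 2 + qi s ^ 2 + qj s ^ 2 + qk s ^ 2 <> 0.
Proof.
  destruct s as [a b c d]; simpl; intros Hs H. apply Hs.
  assert (a = 0) by nra. assert (b = 0) by nra. assert (c = 0) by nra.
  assert (d = 0) by nra. subst; reflexivity.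
Qed.

Lemma qinv_l s a : s <> qzero -> qmul (qinv s) (qmul s a) = a.
Proof.
  intro Hs; pose proof (nz_norm s Hs) as Hn.
  destruct s as [s1 s2 s3 s4], a as [a1 a2 a3 a4]; simpl in *.
  unfold qinv, qmul; simpl; f_equal; field; intro Hc; apply Hn; rewrite <- Hc; ring.
Qed.

Lemma qinv_r s a : s <> qzero -> qmul (qmul a s) (qinv s) = a.
Proof.
  intro Hs; pose proof (nz_norm s Hs) as Hn.
  destruct s as [s1 s2 s3 s4], a as [a1 a2 a3 a4]; simpl in *.
  unfold qinv, qmul; simpl; f_equal; field; intro Hc; apply Hn; rewrite <- Hc; ring.
Qed.

Theorem lemma2p3 (S : qset)
  (S_add : forall a b, S a -> S b -> S (qadd a b))
  (S_dense : forall (x : quat) (eps : R), 0 < eps ->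
     exists s, S s /\ qnorm (qsub s x) < eps)
  (S_nz : forall a, S a -> a <> qzero)
  (S_mul : forall a b, S a -> S b -> S (qmul a b)) :
  (forall A : qset, (forall a, A a -> S a) -> IP_near0 S A ->
     forall s, S s -> qnorm s < 1 -> s <> qzero ->
       IP_near0 S (fun y => exists a, A a /\ y = qmul s a))
  /\
  (forall A : qset, (forall a, A a -> S a) -> IPstar_near0 S A ->
     forall s, S s -> qnorm s < 1 -> s <> qzero ->
       IPstar_near0 S (fun t => S t /\ A (qmul s t)) /\
       IPstar_near0 S (fun t => S t /\ A (qmul t s))).
Proof.
  split.
  - intros A _ HA s Ss _ _. apply (part1 S A (qmul s)); auto. apply linb_l.
  - intros A _ HA s Ss _ Hs. split.
    + apply (part2 S A (qmul s) (qmul (qinv s))); auto using linb_l.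
      intro a; apply qinv_l; auto.
    + apply (part2 S A (fun t => qmul t s) (fun t => qmul t (qinv s))); auto using linb_r.
      intro a; apply qinv_r; auto.
Qed.
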